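(* Let $k\ge3$, $\ell=k-2$, and let $\mathcal C\subseteq(S^{k-1})^n$ be a vector $k$-separating code with $|\mathcal C|>k$. Let $\{S_1,\dots,S_{k-1}\}$ be a uniformly random $(k-1)$-element subset of $\mathcal C$ and let $j$ be uniform in $[n]$ independent of it. Then \[ \frac{\log_2(|\mathcal C|-\ell)}{n}\le \Pr\bigl[S_{a}(j)\perp S_{b}(j)\text{ for all } a\neq b\bigr], \] where $S_a(j)$ is the $j$-th coordinate of $S_a$. Moreover, if $Y_1,\dots,Y_{k-1}$ are drawn independently and uniformly from $\mathcal C$ (with replacement) and $j$ uniform in $[n]$, then \[ \Bigl(1-\frac{\ell^2}{|\mathcal C|}\Bigr)\frac{\log_2(|\mathcal C|-\ell)}{n}\le \Pr\bigl[Y_a(j)\perp Y_b(j)\text{ for all }a\ne b\bigr]. \]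
   Context: $S^{k-1}$ is the unit sphere in $\mathbb R^k$. A subset $\mathcal C\subseteq (S^{k-1})^n$ is vector $k$-separating if for any $k$ distinct codewords $c^{(1)},\dots,c^{(k)}\in\mathcal C$ there is a coordinate $i\in[n]$ such that $c^{(1)}_i,\dots,c^{(k)}_i$ are mutually orthogonal. *)

(* Defs.v *)
From HB Require Import structures.
From mathcomp Require Import all_boot all_order all_algebra.
From mathcomp Require Import reals exp.
Set Implicit Arguments. Unset Strict Implicit. Unset Printing Implicit Defensive.
Import Order.TTheory GRing.Theory Num.Theory.
Local Open Scope ring_scope.

Definition dotv (R : realType) (k : nat) (u v : 'rV[R]_k) : R := (u *m v^T) 0 0.

Definition on_sphere (R : realType) (k : nat) (u : 'rV[R]_k) : Prop := dotv u u = 1.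

Definition orthb (R : realType) (k : nat) (u v : 'rV[R]_k) : bool := dotv u v == 0.

(* A code C ⊆ (S^{k-1})^n with |C| = m is given by an injective enumeration
   c : 'I_m -> ('I_n -> 'rV[R]_k) of its codewords. *)
Definition sphere_code (R : realType) (k n m : nat) (c : 'I_m -> 'I_n -> 'rV[R]_k) : Prop :=
  injective c /\ forall (x : 'I_m) (i : 'I_n), on_sphere (c x i).

Definition vector_k_separating (R : realType) (k n m : nat)
  (c : 'I_m -> 'I_n -> 'rV[R]_k) : Prop :=
  forall s : 'I_k -> 'I_m, injective s ->
    exists i : 'I_n, forall a b : 'I_k, a != b -> orthb (c (s a) i) (c (s b) i).

Definition log2 (R : realType) (x : R) : R := ln x / ln 2.

Definition prob_subset (R : realType) (k n m : nat) (c : 'I_m -> 'I_n -> 'rV[R]_k) : R :=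
  (#|[set p : {set 'I_m} * 'I_n | (#|p.1| == k.-1) &&
       [forall a in p.1, forall b in p.1, (a != b) ==> orthb (c a p.2) (c b p.2)]]|%:R)
  / ((#|[set S : {set 'I_m} | #|S| == k.-1]| * n)%N%:R).

Definition prob_tuple (R : realType) (k n m : nat) (c : 'I_m -> 'I_n -> 'rV[R]_k) : R :=
  (#|[set p : {ffun 'I_k.-1 -> 'I_m} * 'I_n |
       [forall a, forall b, (a != b) ==> orthb (c (p.1 a) p.2) (c (p.1 b) p.2)]]|%:R)
  / ((m ^ k.-1 * n)%N%:R).

(* Main.v *)
Require Import Defs.
From HB Require Import structures.
From mathcomp Require Import all_boot all_order all_algebra.
From mathcomp Require Import reals exp.
From mathcomp Require Import all_fingroup.
From mathcomp Require Import ring lra zify.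
Import Order.TTheory GRing.Theory Num.Theory.
Local Open Scope ring_scope.

Module Aux.
Set Implicit Arguments. Unset Strict Implicit. Unset Printing Implicit Defensive.

Section Geo.
Variable R : realType.

Lemma dotvE k (u v : 'rV[R]_k) : dotv u v = \sum_j u 0 j * v 0 j.
Proof. by rewrite /dotv !mxE; apply: eq_bigr => j _; rewrite mxE. Qed.

Lemma dotvC k (u v : 'rV[R]_k) : dotv u v = dotv v u.
Proof. by rewrite !dotvE; apply: eq_bigr => j _; exact: mulrC. Qed.

Lemma dotvZl k a (u v : 'rV[R]_k) : dotv (a *: u) v = a * dotv u v.
Proof. by rewrite !dotvE mulr_sumr; apply: eq_bigr => j _; rewrite mxE mulrA. Qed.

Lemma dotv_ge0 k (u : 'rV[R]_k) : 0 <= dotv u u.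
Proof. by rewrite dotvE; apply: sumr_ge0 => j _; rewrite -expr2 sqr_ge0. Qed.

Lemma dotv_eq0 k (u : 'rV[R]_k) : dotv u u = 0 -> u = 0.
Proof.
rewrite dotvE => /psumr_eq0P H; apply/rowP => j; rewrite !mxE.
have /eqP := H (fun j _ => ltac:(rewrite -expr2 sqr_ge0 //)) j isT.
by rewrite mulf_eq0 orbb => /eqP.
Qed.

Lemma exists_orth k (L : seq 'rV[R]_k) : (size L < k)%N ->
  exists s : 'rV[R]_k, dotv s s = 1 /\ forall w, w \in L -> dotv s w = 0.
Proof.
move=> ltLk.
pose M : 'M[R]_(size L, k) := \matrix_(j, l) (nth 0 L j) 0 l.
pose K := kermx M^T.
have rK : (0 < \rank K)%N.
  rewrite /K mxrank_ker; have := rank_leq_col M^T; lia.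
have [j nzj] : exists j, row j K != 0.
  apply/existsP; apply: contraTT rK; rewrite negb_exists => /forallP Hr.
  suff -> : K = 0 by rewrite mxrank0.
  apply/row_matrixP => j; rewrite row0; apply/eqP; have := Hr j; by rewrite negbK.
set u := row j K in nzj.
have uM : u *m M^T = 0 by rewrite /u -row_mul mulmx_ker row0.
have uw : forall w, w \in L -> dotv u w = 0.
  move=> w wL; have := congr1 (fun A : 'M[R]_(1, size L) => A 0 (Ordinal (etrans (index_mem w L) wL) : 'I_(size L))) uM.
  rewrite /= !mxE => <-; rewrite /dotv mxE; apply: eq_bigr => l _.
  by rewrite !mxE /= nth_index.
have dpos : 0 < dotv u u.
  rewrite lt_def dotv_ge0 andbT; by apply: contra nzj => /eqP/dotv_eq0 ->.
pose s := ((Num.sqrt (dotv u u))^-1 *: u).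
exists s; split; rewrite /s.
  rewrite dotvZl dotvC dotvZl mulrA -expr2 exprVn sqr_sqrtr ?mulVf //.
    by rewrite gt_eqF.
  by rewrite ltW.
by move=> w wL; rewrite dotvZl (uw w wL) mulr0.
Qed.

Lemma dot_expand k (L : seq 'rV[R]_k) : size L = k -> pairwise (@orthb R k) L ->
  (forall w, w \in L -> dotv w w = 1) ->
  forall u v : 'rV[R]_k, dotv u v = \sum_(w <- L) dotv u w * dotv v w.
Proof.
move=> sL pL uL u v.
pose M : 'M[R]_k := \matrix_(j, l) (nth 0 L j) 0 l.
have MM : M *m M^T = 1%:M.
  apply/matrixP => a b; rewrite !mxE.
  have -> : \sum_j M a j * M^T j b = dotv (nth 0 L a) (nth 0 L b).
    by rewrite dotvE; apply: eq_bigr => j _; rewrite !mxE.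
  have ha : (a < size L)%N by rewrite sL.
  have hb : (b < size L)%N by rewrite sL.
  case: (ltngtP a b) => hab.
  - have := (elimT (pairwiseP 0) pL) a b ha hb hab; rewrite /orthb => /eqP ->.
    by move: hab; case: eqP => [->|]; rewrite ?ltnn.
  - have := (elimT (pairwiseP 0) pL) b a hb ha hab; rewrite /orthb dotvC => /eqP ->.
    by move: hab; case: eqP => [->|]; rewrite ?ltnn.
  - have -> : a = b by apply: val_inj.
    by rewrite eqxx uL // mem_nth.
have MM' := mulmx1C MM.
have -> : dotv u v = ((u *m M^T) *m (M *m v^T)) 0 0.
  by rewrite mulmxA -(mulmxA u) MM' mulmx1.
rewrite mxE (big_nth 0) big_mkord sL; apply: eq_bigr => j _.
rewrite !mxE; congr (_ * _).
  by rewrite dotvE; apply: eq_bigr => l _; rewrite !mxE.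
by rewrite dotvE; apply: eq_bigr => l _; rewrite !mxE mulrC.
Qed.

Definition colr (a b : R) : bool := (0 < a * b) || (b == 0).

Lemma colr_orth a b c d : a ^+ 2 + b ^+ 2 = 1 -> c ^+ 2 + d ^+ 2 = 1 ->
  a * c + b * d = 0 -> colr a b != colr c d.
Proof.
move=> h1 h2 h3.
set t := a * d - b * c.
have hc : c = - t * b.
  have : c + t * b = a * (a * c + b * d) + c * (1 - (a ^+ 2 + b ^+ 2)) by rewrite /t; ring.
  rewrite h3 h1 subrr !mulr0 addr0 => /eqP; rewrite addr_eq0 => /eqP ->; ring.
have hd : d = t * a.
  have : d - t * a = b * (a * c + b * d) + d * (1 - (a ^+ 2 + b ^+ 2)) by rewrite /t; ring.
  rewrite h3 h1 subrr !mulr0 addr0 => /eqP; rewrite subr_eq0 => /eqP ->.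
  done.
have ht : t ^+ 2 = 1.
  have : t ^+ 2 + (a * c + b * d) ^+ 2 = (a ^+ 2 + b ^+ 2) * (c ^+ 2 + d ^+ 2) by rewrite /t; ring.
  by rewrite h3 h1 h2 mulr1 expr0n addr0.
have hcd : colr c d = (0 < - (a * b)) || (a == 0).
  rewrite /colr hc hd.
  have -> : - t * b * (t * a) = - (a * b) * t ^+ 2 by ring.
  rewrite ht mulr1 mulf_eq0; case: (t =P 0) => [t0|//].
  by move: ht; rewrite t0 expr0n /= => /eqP; rewrite eq_sym oner_eq0.
rewrite hcd /colr.
case: (ltrgtP 0 (a * b)) => hab.
- rewrite oppr_gt0 (lt_gtF hab) /=.
  by move: hab; case: (a =P 0) => [->|]; rewrite ?mul0r ?ltxx.
- rewrite oppr_gt0 hab /=.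
  by move: hab; case: (b =P 0) => [->|]; rewrite ?mulr0 ?ltxx.
- rewrite -hab oppr0 ltxx /=.
  move/esym/eqP: hab; rewrite mulf_eq0 => /orP [] /eqP h.
    rewrite h eqxx; case: (b =P 0) => // hb; move: h1; rewrite h hb expr0n add0r.
    by move/eqP; rewrite eq_sym oner_eq0.
  rewrite h eqxx /=; case: (a =P 0) => // ha; move: h1; rewrite h ha expr0n addr0.
  by move/eqP; rewrite eq_sym oner_eq0.
Qed.

End Geo.


Lemma pairwise_uniq_all (T : eqType) (r : rel T) (s : seq T) :
  uniq s -> {in s &, forall x y, x != y -> r x y} -> pairwise r s.
Proof.
elim: s => //= x s IH /andP [xs us] H; apply/andP; split.
  apply/allP => y ys; apply: H; rewrite ?inE ?eqxx ?ys ?orbT //.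
  by apply: contraNneq xs => ->.
by apply: IH => // a b aS bS; apply: H; rewrite inE ?aS ?bS orbT.
Qed.

Section Code.
Variables (R : realType) (m n k : nat) (c : 'I_m -> 'I_n -> 'rV[R]_k).

Definition oa (S : {set 'I_m}) (i : 'I_n) : bool :=
  [forall a in S, forall b in S, (a != b) ==> orthb (c a i) (c b i)].

Lemma oaP (S : {set 'I_m}) i a b : oa S i -> a \in S -> b \in S -> a != b -> dotv (c a i) (c b i) = 0.
Proof.
move=> /forallP /(_ a) /implyP H aS bS ab.
by move: (H aS) => /forallP /(_ b) /implyP /(_ bS) /implyP /(_ ab) /eqP.
Qed.

Lemma oa_sub (A B : {set 'I_m}) i : A \subset B -> oa B i -> oa A i.
Proof.
move=> /subsetP AB oB; apply/forallP => a; apply/implyP => aA.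
apply/forallP => b; apply/implyP => bA; apply/implyP => ab.
by apply/eqP; apply: (oaP oB); rewrite ?AB.
Qed.

Definition VV (T : {set 'I_m}) (i : 'I_n) := [set x | (x \notin T) && oa (x |: T) i].

Hypothesis unit : forall x i, dotv (c x i) (c x i) = 1.

Lemma coloring (T : {set 'I_m}) (i : 'I_n) : #|T|.+2 = k ->
  exists f : 'I_m -> bool, forall x y, x \in VV T i -> y \in VV T i ->
    orthb (c x i) (c y i) -> f x != f y.
Proof.
move=> hT.
case: (pickP (fun x => x \in VV T i)) => [x0 Vx0 | V0]; last first.
  by exists xpredT => x y; rewrite V0.
move: (Vx0); rewrite inE => /andP [x0T ox0].
have tx0 : forall t, t \in T -> dotv (c t i) (c x0 i) = 0.
  move=> t tT; apply: (oaP ox0); rewrite ?inE ?tT ?eqxx ?orbT //.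
  by apply: contraNneq x0T => <-.
pose L0 := map (fun t => c t i) (enum T) ++ [:: c x0 i].
have sL0 : (size L0 < k)%N.
 rewrite size_cat size_map -cardE /= addn1 -hT; exact: ltnSn.
have [s [ss so]] := exists_orth sL0.
pose L := map (fun t => c t i) (enum T) ++ [:: c x0 i; s].
have sL : size L = k by rewrite size_cat size_map -cardE /= addn2.
have pL : pairwise (@orthb R k) L.
  rewrite pairwise_cat; apply/and3P; split.
  - apply/allrelP => u v /mapP [t tT ->]; rewrite mem_enum in tT.
    rewrite !inE => /orP [] /eqP ->; rewrite /orthb.
      by rewrite tx0.
    by rewrite dotvC so // mem_cat map_f ?mem_enum.
  - rewrite pairwise_map; apply: pairwise_uniq_all; first exact: enum_uniq.
    move=> a b; rewrite !mem_enum => aT bT ab /=; rewrite /orthb.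
    apply/eqP; apply: (oaP ox0) => //; rewrite inE ?aT ?bT orbT //.
  - by rewrite pairwise2 /orthb dotvC so // mem_cat inE eqxx orbT.
have uL : forall w, w \in L -> dotv w w = 1.
  move=> w; rewrite mem_cat => /orP [/mapP [t _ ->] //|].
  by rewrite !inE => /orP [] /eqP ->.
have key : forall x y, x \in VV T i -> y \in VV T i ->
    dotv (c x i) (c y i) = dotv (c x i) (c x0 i) * dotv (c y i) (c x0 i)
                           + dotv (c x i) s * dotv (c y i) s.
  move=> x y; rewrite !inE => /andP [xT ox] _.
  rewrite (dot_expand sL pL uL) big_cat /= big_cons big_seq1 big1_seq ?add0r //.
  move=> w /andP [_ /mapP [t tT ->]]; rewrite mem_enum in tT.
  rewrite (oaP ox) ?mul0r // ?inE ?eqxx ?tT ?orbT //.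
  by apply: contraNneq xT => ->.
exists (fun x => colr (dotv (c x i) (c x0 i)) (dotv (c x i) s)).
move=> x y Vx Vy /eqP oxy; apply: colr_orth.
- by rewrite !expr2 -key.
- by rewrite !expr2 -key.
- by rewrite -key.
Qed.

Hypothesis vks : vector_k_separating c.

Lemma sep_pair (T : {set 'I_m}) : #|T|.+2 = k -> forall x y, x \notin T -> y \notin T -> x != y ->
  exists i, [&& x \in VV T i, y \in VV T i & orthb (c x i) (c y i)].
Proof.
move=> hT x y xT yT xy.
pose S := x |: (y |: T).
have hS : #|S| = k.
  by rewrite /S !cardsU1 in_setU1 (negbTE xy) (negbTE xT) yT /= -hT !add1n.
pose s := fun a : 'I_k => @enum_val _ (mem S) (cast_ord (esym hS) a).
have sinj : injective s.
  by move=> a b /enum_val_inj /cast_ord_inj.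
have [i Hi] := vks sinj.
have oS : oa S i.
  apply/forallP => a; apply/implyP => aS; apply/forallP => b; apply/implyP => bS.
  apply/implyP => ab.
  have ea : a = s (cast_ord hS (enum_rank_in aS a)).
    by rewrite /s cast_ordK enum_rankK_in.
  have eb : b = s (cast_ord hS (enum_rank_in aS b)).
    by rewrite /s cast_ordK enum_rankK_in.
  rewrite ea eb; apply: Hi; apply: contra ab => /eqP e; by rewrite ea eb e.
exists i; apply/and3P; split.
- rewrite inE xT /=; apply: oa_sub oS; apply: setUS; exact: subsetUr.
- rewrite inE yT /=; apply: oa_sub oS; exact: subsetUr.
- apply/eqP; apply: (oaP oS _ _ xy); rewrite /S !inE eqxx ?orbT //.
Qed.

End Code.


Lemma card_fix (n : nat) (A : {set 'I_n}) (h : 'I_n -> bool) :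
  #|[set g : {ffun 'I_n -> bool} | [forall i, (i \in A) ==> (g i == h i)]]| = (2 ^ (n - #|A|))%N.
Proof.
pose F := fun i : 'I_n => if i \in A then pred1 (h i) else predT.
have -> : #|[set g : {ffun 'I_n -> bool} | [forall i, (i \in A) ==> (g i == h i)]]| = #|(family F : simpl_pred {ffun 'I_n -> bool})|.
  apply: eq_card => g; rewrite inE; apply/forallP/familyP => H i; have := H i;
  rewrite /F; case: (i \in A) => //=.
rewrite card_family foldrE big_map big_enum /=.
have -> : (\prod_(i in 'I_n) #|F i| = \prod_(i in ~: A) 2)%N.
  rewrite [RHS]big_mkcond /=; apply: eq_bigr => i _; rewrite /F inE.
  by case: (i \in A) => /=; rewrite ?card1 ?card_bool.
rewrite prod_nat_const; congr (_ ^ _)%N.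
have hc := cardsC A; rewrite card_ord in hc.
transitivity (#|A| + #|~: A| - #|A|)%N; first by rewrite addKn.
by rewrite hc.
Qed.

Lemma card_sumI (I : finType) (A : {set I}) : #|A| = (\sum_x (x \in A))%N.
Proof. by rewrite -sum1_card big_mkcond /=; apply: eq_bigr => x _; case: (x \in A). Qed.

Lemma hansel_nat (I : finType) (n : nat) (X : {set I}) (V : 'I_n -> {set I})
    (f : 'I_n -> I -> bool) :
  (forall x y, x \in X -> y \in X -> x != y ->
     exists i, [&& x \in V i, y \in V i & f i x != f i y]) ->
  (\sum_(x in X) 2 ^ (n - #|[set i | x \in V i]|) <= 2 ^ n)%N.
Proof.
move=> sep.
pose surv (g : {ffun 'I_n -> bool}) x := [forall i, (x \in V i) ==> (g i == f i x)].
have e1 : forall x, (2 ^ (n - #|[set i | x \in V i]|) = \sum_g surv g x)%N.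
  move=> x; rewrite -(card_fix _ (fun i => f i x)) card_sumI; apply: eq_bigr => g _.
  rewrite !inE; congr nat_of_bool; apply: eq_forallb => i; by rewrite inE.
rewrite (eq_bigr _ (fun x _ => e1 x)) exchange_big /=.
have le1 : forall g, (\sum_(x in X) surv g x <= 1)%N.
  move=> g; have -> : (\sum_(x in X) surv g x = #|[set x in X | surv g x]|)%N.
    rewrite card_sumI big_mkcond /=; apply: eq_bigr => x _; rewrite !inE.
    by case: (x \in X).
  rewrite leqNgt; apply/negP => /card_gt1P [x [y [xS yS xy]]].
  move: xS yS; rewrite !inE => /andP [xX sx] /andP [yX sy].
  have [i /and3P [xi yi fxy]] := sep x y xX yX xy.
  move: sx sy => /forallP /(_ i) /implyP /(_ xi) /eqP hx /forallP /(_ i) /implyP /(_ yi) /eqP hy.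
  by move: fxy; rewrite -hx -hy eqxx.
apply: (@leq_trans (\sum_(g : {ffun 'I_n -> bool}) 1)%N); first exact: leq_sum.
by rewrite sum1_card card_ffun card_bool card_ord.
Qed.

Lemma hansel (R : realType) (I : finType) (n : nat) (X : {set I}) (V : 'I_n -> {set I})
    (f : 'I_n -> I -> bool) :
  (forall i, V i \subset X) ->
  (forall x y, x \in X -> y \in X -> x != y ->
     exists i, [&& x \in V i, y \in V i & f i x != f i y]) ->
  (#|X|%:R * log2 (#|X|%:R : R) <= (\sum_i #|V i|)%:R :> R).
Proof.
move=> subV sep.
pose t := fun x => #|[set i | x \in V i]|.
have St : (\sum_i #|V i| = \sum_(x in X) t x)%N.
  rewrite /t; under eq_bigr do rewrite card_sumI.
  under [RHS]eq_bigr do rewrite card_sumI.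
  rewrite exchange_big /= [RHS]big_mkcond /=; apply: eq_bigr => x _.
  case: (boolP (x \in X)) => xX; first by apply: eq_bigr => i _; rewrite inE.
  apply: big1 => i _; case: (boolP (x \in V i)) => // /(subsetP (subV i)).
  by rewrite (negbTE xX).
have H := hansel_nat sep.
have [N0|Npos] := posnP #|X|; first by rewrite N0 mul0r ler0n.
have tle : forall x, (t x <= n)%N.
  by move=> x; rewrite /t -[X in (_ <= X)%N](card_ord n); apply: max_card.
have two0 : forall j, (2 : R) ^+ j != 0 by move=> j; rewrite expf_neq0 // pnatr_eq0.
have H1 : \sum_(x in X) ((2:R) ^+ t x)^-1 <= 1.
  have : ((\sum_(x in X) 2 ^ (n - t x))%:R <= (2 ^ n)%:R :> R) by rewrite ler_nat.
  have ex : forall x, ((2 ^ (n - t x))%:R : R) = 2 ^+ n * (2 ^+ t x)^-1.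
    by move=> x; rewrite natrX -[in RHS](subnK (tle x)) exprD mulfK.
  rewrite natr_sum (eq_bigr _ (fun x _ => ex x)) -mulr_sumr natrX.
  rewrite -[X in (_ <= X) -> _]mulr1 ler_pM2l //.
  by rewrite exprn_gt0.
have Ege0 : {in mem X, forall x, 0 <= ((2:R) ^+ t x)^-1}.
  by move=> x _; rewrite invr_ge0 exprn_ge0.
have [HA _] := @leif_AGM R _ (mem X) (fun x => ((2:R) ^+ t x)^-1) Ege0.
move: HA; rewrite prodfV prodrXr -St /=.
set S := (\sum_i #|V i|)%N => HA.
have hN : (0:R) < #|X|%:R by rewrite ltr0n.
have mu_le : (\sum_(i in X) 2 ^- t i) / #|X|%:R <= #|X|%:R^-1 :> R.
  rewrite -[Z in _ <= Z]mul1r; apply: ler_wpM2r => //; rewrite invr_ge0 ltW //.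
have mu_ge : 0 <= (\sum_(i in X) 2 ^- t i) / #|X|%:R :> R.
  by rewrite divr_ge0 // sumr_ge0 // => i _; rewrite invr_ge0 exprn_ge0.
have HB : (2:R) ^- S <= (#|X|%:R^-1) ^+ #|X|.
  apply: (le_trans HA); apply: lerXn2r => //; rewrite nnegrE // invr_ge0 ltW //.
rewrite exprVn lef_pV2 ?posrE ?exprn_gt0 // in HB.
rewrite -ler_ln ?posrE ?exprn_gt0 // !lnXn // in HB.
have l2 : (0:R) < ln 2 by apply: ln_gt0; rewrite ltr1n.
rewrite /log2 mulrA ler_pdivrMr //.
move: HB; rewrite -(mulr_natr (ln #|X|%:R)) -(mulr_natr (ln 2)) => HB.
by rewrite mulrC [Z in _ <= Z]mulrC.
Qed.


Section Count.
Variables (R : realType) (m n k : nat) (c : 'I_m -> 'I_n -> 'rV[R]_k).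

Lemma biject (l : nat) (x : 'I_m) (i : 'I_n) :
  #|[set T : {set 'I_m} | (#|T| == l) && (x \in VV c T i)]| =
  #|[set S : {set 'I_m} | [&& #|S| == l.+1, x \in S & oa c S i]]|.
Proof.
set D := [set T : {set 'I_m} | _].
have -> : [set S : {set 'I_m} | [&& #|S| == l.+1, x \in S & oa c S i]] = (fun T => x |: T) @: D.
  apply/setP => S; rewrite inE; apply/idP/imsetP.
  - case/and3P => /eqP hS xS oS; exists (S :\ x); last by rewrite setD1K.
    rewrite inE; apply/andP; split.
      by move: hS; rewrite (cardsD1 x S) xS add1n => -[->].
    by rewrite inE setD11 /= setD1K.
  - case=> T; rewrite inE => /andP [/eqP hT]; rewrite inE => /andP [xT oT] ->.
    by rewrite cardsU1 xT hT add1n eqxx setU11 oT.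
rewrite card_in_imset // => T1 T2; rewrite !inE => /andP [_ /andP [x1 _]] /andP [_ /andP [x2 _]] e.
by rewrite -(setU1K x1) -(setU1K x2) e.
Qed.

Definition G1 (l : nat) := [set p : {set 'I_m} * 'I_n | (#|p.1| == l.+1) && oa c p.1 p.2].

Lemma double_count (l : nat) :
  (\sum_(T : {set 'I_m} | #|T| == l) \sum_i #|VV c T i| = l.+1 * #|G1 l|)%N.
Proof.
rewrite exchange_big /=.
have cG : #|G1 l| = (\sum_i #|[set S : {set 'I_m} | (#|S| == l.+1) && oa c S i]|)%N.
  rewrite (@card_sumI _ (G1 l)).
  under [RHS]eq_bigr do rewrite card_sumI.
  rewrite exchange_big /= pair_big /=; apply: eq_bigr => -[S j] _; by rewrite !inE.
rewrite cG big_distrr /=; apply: eq_bigr => i _.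
transitivity (\sum_x #|[set T : {set 'I_m} | (#|T| == l) && (x \in VV c T i)]|)%N.
  under eq_bigr do rewrite card_sumI.
  under [RHS]eq_bigr do rewrite card_sumI.
  rewrite exchange_big /= [LHS]big_mkcond /=; apply: eq_bigr => x _.
  rewrite big_mkcond /=; apply: eq_bigr => T _; rewrite !inE; by case: (#|T| == l).
under eq_bigr do rewrite biject card_sumI.
rewrite exchange_big /= card_sumI big_distrr /=; apply: eq_bigr => S _.
rewrite inE; case: (boolP (#|S| == l.+1)) => [/eqP hS|nS] /=; last first.
  by rewrite muln0; apply: big1 => x _; rewrite inE (negbTE nS).
case: (boolP (oa c S i)) => oS /=; last first.
  by rewrite muln0; apply: big1 => x _; rewrite !inE (negbTE oS) !andbF.
rewrite muln1 -[in RHS]hS (card_sumI S); apply: eq_bigr => x _; by rewrite !inE hS eqxx oS andbT.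
Qed.

End Count.

Lemma part1 (R : realType) (m n l : nat) (c : 'I_m -> 'I_n -> 'rV[R]_l.+2) :
  (forall x i, dotv (c x i) (c x i) = 1) -> vector_k_separating c ->
  ('C(m, l.+1))%:R * log2 ((m - l)%:R : R) <= #|G1 c l|%:R.
Proof.
move=> unit vks.
have hT : forall T : {set 'I_m}, #|T| == l ->
    (m - l)%:R * log2 ((m - l)%:R : R) <= (\sum_i #|VV c T i|)%:R.
  move=> T /eqP hT.
  have hT2 : #|T|.+2 = l.+2 by rewrite hT.
  have [f hf] := fin_all_exists (fun i => coloring unit i hT2).
  have cX : #|~: T| = (m - l)%N.
    have hc := cardsC T; rewrite card_ord hT in hc.
    transitivity (l + #|~: T| - l)%N; first by rewrite addKn.
    by rewrite hc.
  rewrite -cX; apply: (@hansel _ _ _ _ _ f).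
  - by move=> i; apply/subsetP => x; rewrite !inE => /andP [].
  - move=> x y; rewrite !inE => xT yT xy.
    have [i /and3P [xi yi o]] := sep_pair vks hT2 xT yT xy.
    by exists i; rewrite xi yi hf.
have dc := double_count c l.
have S1 : ('C(m, l) * (m - l))%:R * log2 ((m - l)%:R : R) <=
          (\sum_(T : {set 'I_m} | #|T| == l) \sum_i #|VV c T i|)%:R.
  rewrite natr_sum; apply: le_trans (ler_sum _ hT).
  have -> : \sum_(T : {set 'I_m} | #|T| == l) (m - l)%:R * log2 ((m - l)%:R : R) =
            \sum_(T in [set T : {set 'I_m} | #|T| == l]) (m - l)%:R * log2 ((m - l)%:R : R).
    by apply: eq_bigl => T; rewrite inE.
  by rewrite sumr_const card_draws card_ord natrM -mulrA mulr_natl.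
rewrite dc mulnC -mul_bin_left natrM natrM -mulrA in S1.
by rewrite -(ler_pM2l (_ : 0 < l.+1%:R)) ?ltr0n.
Qed.


Definition G2 (R : realType) (m n l : nat) (c : 'I_m -> 'I_n -> 'rV[R]_l.+2) :=
  [set p : {ffun 'I_l.+1 -> 'I_m} * 'I_n |
       [forall a, forall b, (a != b) ==> orthb (c (p.1 a) p.2) (c (p.1 b) p.2)]].

Lemma count2 (R : realType) (m n l : nat) (c : 'I_m -> 'I_n -> 'rV[R]_l.+2) :
  (0 < m)%N -> (#|G1 c l| * (l.+1)`! <= #|G2 c|)%N.
Proof.
move=> m0; pose x0 : 'I_m := Ordinal m0.
pose Phi (q : ({set 'I_m} * 'I_n) * {perm 'I_l.+1}) :=
  ([ffun a => nth x0 (enum q.1.1) (q.2 a)], q.1.2).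
pose D := setX (G1 c l) [set: {perm 'I_l.+1}].
have cD : #|D| = (#|G1 c l| * (l.+1)`!)%N by rewrite cardsX cardsT card_Sn.
have sz : forall S : {set 'I_m}, #|S| = l.+1 -> size (enum S) = l.+1.
  by move=> S <-; rewrite cardE.
have img : forall (S : {set 'I_m}) (s : {perm 'I_l.+1}), #|S| = l.+1 ->
    S = [set nth x0 (enum S) (s a) | a in 'I_l.+1].
  move=> S s hS; apply/setP => x; apply/idP/imsetP.
  - move=> xS; have hx : (index x (enum S) < l.+1)%N by rewrite -(sz S hS) index_mem mem_enum.
    exists (s^-1 (Ordinal hx))%g => //; by rewrite permKV /= nth_index // mem_enum.
  - case=> a _ ->; rewrite -mem_enum; apply: mem_nth; by rewrite sz.
rewrite -cD -(card_in_imset (f := Phi)); last first.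
  move=> [[S1 i1] s1] [[S2 i2] s2]; rewrite !inE /= => /andP [/andP [/eqP h1 _] _]
    /andP [/andP [/eqP h2 _] _] [e1 e2].
  have eS : S1 = S2.
    rewrite (img S1 s1 h1) (img S2 s2 h2); apply/setP => x; apply/imsetP/imsetP => -[a _ ->];
    exists a => //; have := congr1 (fun f : {ffun 'I_l.+1 -> 'I_m} => f a) e1; rewrite !ffunE //.
  subst S2 i2; congr (_, _); apply/permP => a.
  have := congr1 (fun f : {ffun 'I_l.+1 -> 'I_m} => f a) e1; rewrite !ffunE => /eqP.
  rewrite nth_uniq ?sz ?enum_uniq //; by move/eqP/val_inj.
apply: subset_leq_card; apply/subsetP => p /imsetP [[[S i] s]].
rewrite !inE /= => /andP [/andP [/eqP hS oS] _] ->; rewrite /=.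
apply/forallP => a; apply/forallP => b; apply/implyP => ab; rewrite !ffunE.
apply/eqP; apply: (oaP oS); try by rewrite -mem_enum mem_nth ?sz.
rewrite nth_uniq ?sz ?enum_uniq //; apply: contra ab => /eqP /val_inj e.
by apply/eqP; apply: perm_inj e.
Qed.


Lemma ffact_lb q n : ((n.+1 - q) ^ q <= n ^_ q)%N.
Proof.
elim: q n => [|q IH] [|n] //=.
  by rewrite subSS sub0n exp0n.
rewrite ffactnS /= expnS; apply: leq_mul; first by rewrite subSS leq_subr.
by have := IH n; rewrite subSS.
Qed.

Lemma bern (R : realType) (y : R) q : 0 <= y -> y <= 1 -> 1 - q%:R * y <= (1 - y) ^+ q.
Proof.
move=> y0 y1; elim: q => [|q IH]; first by rewrite mul0r subr0 expr0.
rewrite exprS -natr1.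
have h : 0 <= 1 - y by rewrite subr_ge0.
apply: le_trans (ler_wpM2l h IH).
have : 0 <= q%:R * y * y by rewrite mulr_ge0 // mulr_ge0.
lra.
Qed.

Lemma rho_lb (R : realType) (m l : nat) : (l.+2 < m)%N ->
  (1 - (l ^ 2)%N%:R / m%:R) * (m ^ l.+1)%N%:R <= ('C(m, l.+1) * (l.+1)`!)%N%:R :> R.
Proof.
move=> hm.
have m0 : (0 < m)%N by lia.
rewrite bin_ffact ffactnS.
have h1 := ffact_lb l m.-1; rewrite prednK // in h1.
apply: (@le_trans _ _ ((m * (m - l) ^ l)%N%:R)); last by rewrite ler_nat leq_mul.
have mR : (0:R) < m%:R by rewrite ltr0n.
have y0 : (0:R) <= l%:R / m%:R by rewrite divr_ge0.
have y1 : (l%:R / m%:R : R) <= 1 by rewrite ler_pdivrMr // mul1r ler_nat; lia.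
have hb := bern l y0 y1.
have e : ((m - l)%N%:R : R) = m%:R * (1 - l%:R / m%:R).
  by rewrite natrB; [field; rewrite gt_eqF | lia].
rewrite natrM !natrX e exprMn exprS.
have -> : (l%:R ^+ 2 / m%:R : R) = l%:R * (l%:R / m%:R) by rewrite expr2 mulrA.
have hm0 : (0:R) <= m%:R * m%:R ^+ l by rewrite mulr_ge0 // exprn_ge0.
rewrite [m%:R * (_ * _)]mulrA -exprS [_ * _ ^+ l.+1]mulrC.
by apply: ler_wpM2l => //; rewrite exprn_ge0 // ltW.
Qed.

End Aux.
Import Aux.

Theorem mainTheorem10 (R : realType) (k n m : nat)
  (c : 'I_m -> 'I_n -> 'rV[R]_k) :
  (3 <= k)%N ->
  sphere_code c ->
  vector_k_separating c ->
  (k < m)%N ->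
  log2 ((m - (k - 2))%N%:R : R) / n%:R <= prob_subset c /\
  (1 - ((k - 2) ^ 2)%N%:R / m%:R) * (log2 ((m - (k - 2))%N%:R : R) / n%:R)
    <= prob_tuple c.
Proof.
move=> hk [_ unitS] vks hkm.
have [l kl] : exists l, k = l.+2 by exists (k - 2)%N; lia.
subst k.
have unit : forall x i, dotv (c x i) (c x i) = 1 := unitS.
have -> : (l.+2 - 2 = l)%N by lia.
have P1 := part1 unit vks.
have m0 : (0 < m)%N by lia.
have C2 := count2 c m0.
have Rho := rho_lb R hkm.
have ps : prob_subset c = #|G1 c l|%:R / ('C(m, l.+1) * n)%N%:R.
  by rewrite /prob_subset card_draws card_ord.
have pt : prob_tuple c = #|G2 c|%:R / (m ^ l.+1 * n)%N%:R by [].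
set L := log2 ((m - l)%N%:R : R) in P1 *.
have L0 : 0 <= L.
  rewrite /L /log2 divr_ge0 // ?ln_ge0 // ?ler1n //; lia.
have Cpos : (0 : R) < ('C(m, l.+1))%:R by rewrite ltr0n bin_gt0; lia.
have Mpos : (0 : R) < (m ^ l.+1)%N%:R by rewrite ltr0n expn_gt0 m0.
have nn : (0 : R) <= n%:R^-1 by rewrite invr_ge0.
rewrite ps pt (natrM _ ('C(m, l.+1))) (natrM _ (m ^ l.+1)) !invfM; split.
  rewrite [X in _ <= X]mulrA; apply: (ler_wpM2r nn).
  by rewrite ler_pdivlMr // mulrC.
rewrite [X in _ <= X]mulrA [X in X <= _]mulrA; apply: (ler_wpM2r nn).
rewrite ler_pdivlMr //.
set d := 1 - _.
case: (lerP d 0) => hd.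
  apply: (@le_trans _ _ 0); last exact: ler0n.
  rewrite -mulrA mulr_le0_ge0 // mulr_ge0 // ltW //.
rewrite mulrAC; apply: (le_trans (ler_wpM2r L0 Rho)).
rewrite natrM mulrAC.
apply: (le_trans (ler_wpM2r (ler0n _ _) P1)).
by rewrite -natrM ler_nat.
Qed.
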